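(* Let $(X,\Psi)$ be a $\sigma$-compact uniform space and $Y\subseteq X$. The following are equivalent: (1) $X$ satisfies $\textsf{S}_1(\Omega,\Omega_Y)$; (2) for each positive integer $k$, $\Omega\rightarrow(\Omega_Y)^2_k$ holds.
   Context: A uniformity on $X$ is a filter $\Psi$ on $X\times X$ whose members contain the diagonal, closed under $U\mapsto U^{-1}$, such that for each $U\in\Psi$ there is $V\in\Psi$ with $V\circ V\subseteq U$, and with $\bigcap\Psi$ equal to the diagonal; $X$ carries the topology with neighbourhood bases $\{U(x):U\in\Psi\}$, $U(x)=\{y:(x,y)\in U\}$. $\sigma$-compact: countable union of compact sets. $\Omega$ is the set of $\omega$-covers of $X$: open covers $\mathcal{U}$ with $X\notin\mathcal{U}$ such that each finite subset of $X$ lies in some member. $\Omega_Y$ is the set of $\omega$-covers of $Y$ by sets open in $X$: families of open subsets of $X$, none containing $Y$, such that each finite subset of $Y$ lies in some member. $\textsf{S}_1(\mathcal{A},\mathcal{B})$: for every sequence $(O_n)$ of elements of $\mathcal{A}$ there are $T_n\in O_n$ with $\{T_n:n\in\mathbb{N}\}\in\mathcal{B}$. $\mathcal{A}\rightarrow(\mathcal{B})^2_k$: for each $A\in\mathcal{A}$ and $f:[A]^2\to\{1,\dots,k\}$ there are $i$ and $B\subseteq A$, $B\in\mathcal{B}$, with $f$ constant equal to $i$ on the 2-element subsets of $B$. *)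

(* Defs.v *)
From HB Require Import structures.
From mathcomp Require Import all_boot all_order all_algebra.
From mathcomp Require Import all_classical all_reals all_analysis.
Set Implicit Arguments. Unset Strict Implicit. Unset Printing Implicit Defensive.
Local Open Scope classical_set_scope.

Definition entourage_separated (T : uniformType) : Prop :=
  forall x y : T, (forall U, entourage U -> U (x, y)) -> x = y.

Definition sigma_compact (T : topologicalType) : Prop :=
  exists K : nat -> set T, (forall n, compact (K n)) /\ \bigcup_n K n = setT.

Definition omega_cover_of (T : topologicalType) (Y : set T)
    (U : set (set T)) : Prop :=
  (forall W, U W -> open W) /\
  (forall W, U W -> ~ (Y `<=` W)) /\
  (forall F, finite_set F -> F `<=` Y -> exists2 W, U W & F `<=` W).

Definition omega_cover (T : topologicalType) (U : set (set T)) : Prop :=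
  (forall W, U W -> open W) /\
  ~ U setT /\
  (forall F, finite_set F -> exists2 W, U W & F `<=` W).

Definition S1 (T : Type) (A B : set (set T) -> Prop) : Prop :=
  forall O : nat -> set (set T), (forall n, A (O n)) ->
    exists Tn : nat -> set T, (forall n, O n (Tn n)) /\ B (range Tn).

Definition two_subset (S : Type) (A : set S) (P : set S) : Prop :=
  exists x y, x <> y /\ A x /\ A y /\ P = [set x; y].

(* A -> (B)^2_k, colours 'I_k = {0,...,k-1} standing for {1,...,k};
   a colouring of [A]^2 is given by a function on all sets of sets,
   only its values on [A]^2 matter. *)
Definition partition_rel (T : Type) (A B : set (set T) -> Prop) (k : nat) : Prop :=
  forall U : set (set T), A U ->
  forall f : set (set T) -> 'I_k,
    exists (i : 'I_k) (V : set (set T)),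
      V `<=` U /\ B V /\ (forall P, two_subset V P -> f P = i).

(* Main.v *)
Require Import Defs.
From mathcomp Require Import all_boot all_order all_algebra.
From mathcomp Require Import all_classical all_reals all_analysis.
From mathcomp Require Import zify.
Set Implicit Arguments. Unset Strict Implicit. Unset Printing Implicit Defensive.
Local Open Scope classical_set_scope.

Lemma sep_closed1 (T : uniformType) : entourage_separated T ->
  forall x : T, closed [set x].
Proof.
move=> sep x; apply: accessible_closed_set1; apply: hausdorff_accessible => p q cl.
apply: sep; rewrite -entourage_close closeEnbhs; exact: cl.
Qed.

Lemma inj_seq (T : Type) (Y : set T) : infinite_set Y ->
  exists d : nat -> T, (forall n, Y (d n)) /\ injective d.
Proof.
elim/Ppointed: T => T in Y *.
  by move=> nf; exfalso; apply: nf; rewrite emptyE; exact: finite_set0.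
move=> /infiniteP/ppcard_leP[f]; exists f; split.
  by move=> n; apply: funS.
move=> a b e; apply: (@inj _ _ _ f) => //; by rewrite inE.
Qed.

Definition good (T : Type) (Y : set T) (w : nat -> set T) (M : set nat) :=
  forall F, finite_set F -> F `<=` Y -> exists2 m, M m & F `<=` w m.

Lemma good_sub T (Y : set T) w M M' : M `<=` M' -> good Y w M -> good Y w M'.
Proof. by move=> s g F fF FY; have [m Mm Fm] := g F fF FY; exists m => //; apply: s. Qed.

Lemma good_split T (Y : set T) w M A :
  good Y w M -> good Y w (M `&` A) \/ good Y w (M `&` ~` A).
Proof.
move=> gM; case: (pselect (good Y w (M `&` A))) => hA; [by left|right].
move=> F fF FY.
have [F1 h1] : exists F1, ~ (finite_set F1 -> F1 `<=` Y -> exists2 m, (M `&` A) m & F1 `<=` w m).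
  by apply/existsNP.
move/not_implyP: h1 => [fF1 /not_implyP [F1Y nF1]].
have f1 : finite_set (F `|` F1) by rewrite finite_setU.
have s1 : F `|` F1 `<=` Y by move=> x [] ?; [apply: FY|apply: F1Y].
have [m Mm Fm] := gM _ f1 s1.
case: (pselect (A m)) => Am.
  by exfalso; apply: nF1; exists m => // x F1x; apply: Fm; right.
by exists m => // x Fx; apply: Fm; left.
Qed.

Lemma good_part T (Y : set T) w k (h : nat -> nat) M :
  good Y w M -> (forall m, M m -> (h m < k)%N) ->
  exists2 c, (c < k)%N & good Y w (M `&` [set m | h m = c]).
Proof.
elim: k M => [|k IH] M gM hk.
  have [m Mm _] := gM set0 (finite_set0 _) (sub0set _).
  by have := hk m Mm.
have [g1|g2] := good_split [set m | h m = k] gM.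
  by exists k.
have hk2 : forall m, (M `&` ~` [set m | h m = k]) m -> (h m < k)%N.
  by move=> m [Mm /= hm]; have := hk m Mm; rewrite ltnS leq_eqVlt => /orP[/eqP//|//].
have [c ck gc] := IH _ g2 hk2.
exists c; first exact: ltnW.
by apply: good_sub gc => m [[Mm _] e].
Qed.

Lemma good_tail T (Y : set T) w M N0 : (forall i, ~ (Y `<=` w i)) ->
  good Y w M -> good Y w (M `&` [set m | (N0 <= m)%N]).
Proof.
move=> nY gM.
have [x hx] : {x : nat -> T & forall i, Y (x i) /\ ~ w i (x i)}.
  apply: (@choice nat T (fun i y => Y y /\ ~ w i y)) => i; have := nY i => /existsNP [y /not_implyP [Yy nwy]].
  by exists y.
move=> F fF FY.
have fin : finite_set (F `|` [set x i | i in `I_N0]).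
  by rewrite finite_setU; split => //; apply: finite_image; exact: finite_II.
have s1 : F `|` [set x i | i in `I_N0] `<=` Y by move=> y [/FY//|[i _ <-]]; exact: (hx i).1.
have [m Mm Fm] := gM _ fin s1.
exists m; last by move=> y Fy; apply: Fm; left.
split => //=; rewrite leqNgt; apply/negP => mN.
by apply: (hx m).2; apply: Fm; right; exists m.
Qed.

Lemma omega_of (T : topologicalType) (Y : set T) (Wf : set (set T)) :
  (forall W, Wf W -> [/\ open W, ~ (Y `<=` W) & ~` Y `<=` W]) ->
  (forall F, finite_set F -> F `<=` Y -> exists2 W, Wf W & F `<=` W) ->
  omega_cover Wf.
Proof.
move=> hW hF; split; [by move=> W /hW[]|split].
  by move=> /hW[_ nY _]; apply: nY.
move=> F fF.
have fFY : finite_set (F `&` Y) by apply: sub_finite_set fF => x [].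
have [W WW FW] := hF _ fFY (fun x => @proj2 _ _).
exists W => // x Fx; case: (pselect (Y x)) => Yx.
  by apply: FW.
by have [_ _] := hW W WW; apply.
Qed.

Lemma omegaY_of (T : topologicalType) (Y : set T) (Wf : set (set T)) :
  (forall W, Wf W -> open W /\ ~ (Y `<=` W)) ->
  (forall F, finite_set F -> F `<=` Y -> exists2 W, Wf W & F `<=` W) ->
  omega_cover_of Y Wf.
Proof. by move=> hW hF; split; [move=> W /hW[]|split=> // W /hW[]]. Qed.

Lemma good_range (T : topologicalType) (Y : set T) (u : nat -> set T) :
  omega_cover_of Y (range u) -> good Y u setT.
Proof.
move=> [_ [_ h]] F fF FY; have [W [n _ <-] FW] := h F fF FY.
by exists n.
Qed.

Definition Ostar (T : Type) (Y : set T) : set (set T) :=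
  [set ~` [set x] | x in ~` Y].

Lemma Ostar_omega (T : uniformType) (Y : set T) :
  entourage_separated T -> infinite_set (~` Y) -> omega_cover (Ostar Y).
Proof.
move=> sep inf; split; [|split].
- by move=> W [x _ <-]; rewrite openC; apply: sep_closed1.
- move=> [x _ e]; have : (~` [set x]) x by rewrite e.
  by apply.
- move=> F fF.
  have [x [nYx nFx]] : exists x, (~` Y) x /\ ~ F x.
    apply/not_existsP => h; apply: inf; apply: sub_finite_set fF => x nYx.
    by case: (pselect (F x)) => // nF; exfalso; apply: (h x).
  by exists (~` [set x]); [exists x|move=> y Fy /= yx; apply: nFx; rewrite -yx].
Qed.

Lemma Ostar_not (T : topologicalType) (Y : set T) (V : set (set T)) :
  V `<=` Ostar Y -> ~ omega_cover_of Y V.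
Proof.
move=> VO [_ [nY h]].
have [W VW _] := h set0 (finite_set0 _) (sub0set _).
have [x nYx e] := VO W VW.
apply: (nY W VW); rewrite -e => y Yy /= yx; apply: nYx; rewrite -yx.
exact: Yy.
Qed.

Lemma cofin_S1 (T : uniformType) (Y : set T) : entourage_separated T ->
  S1 (@omega_cover T) (omega_cover_of Y) -> finite_set (~` Y).
Proof.
move=> sep hS; apply: contrapT => inf.
have [Tn [hT hY]] := hS (fun _ => Ostar Y) (fun _ => Ostar_omega sep inf).
by apply: (Ostar_not (V := range Tn)) hY => W [n _ <-].
Qed.

Lemma cofin_part (T : uniformType) (Y : set T) : entourage_separated T ->
  partition_rel (@omega_cover T) (omega_cover_of Y) 2 -> finite_set (~` Y).
Proof.
move=> sep hP; apply: contrapT => inf.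
have [i [V [VO [hV _]]]] := hP _ (Ostar_omega sep inf) (fun _ => ord0).
exact: Ostar_not VO hV.
Qed.

Lemma inj_not_in (T : Type) (d : nat -> T) (F : set T) :
  injective d -> finite_set F -> exists n, ~ F (d n).
Proof.
move=> dinj fF; apply/existsNP => hall; apply: infinite_nat.
have : finite_set (d @` setT).
  by apply: sub_finite_set fF => x [n _ <-]; apply: hall.
by rewrite (eq_finite_set (inj_card_eq _)) // => a b _ _; apply: dinj.
Qed.

Lemma omega_infinite (T : topologicalType) (O : set (set T)) :
  omega_cover O -> infinite_set [set: T].
Proof.
move=> [_ [nT h]] fT; have [W OW sW] := h _ fT.
have e : W = setT by rewrite -subTset.
by apply: nT; rewrite -e.
Qed.

Definition Rk (T : Type) (Y : set T) (O : nat -> set (set T)) (d : nat -> T)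
  (n : nat) (w : set T) : Prop :=
  exists A, [/\ O n A, ~` Y `<=` A, (forall i, (i < n)%N -> A (d i)) & w = A `\ d n].

Lemma Rk_uniq T Y O (d : nat -> T) n n' w : injective d ->
  Rk Y O d n w -> Rk Y O d n' w -> n = n'.
Proof.
move=> dinj.
have key : forall a b, (a < b)%N -> Rk Y O d a w -> Rk Y O d b w -> False.
  move=> a b ab [A [_ _ _ ->]] [B [_ _ hB e]].
  have : (B `\ d b) (d a).
    split; first exact: hB. by move=> /= /dinj abe; rewrite abe ltnn in ab.
  by rewrite -e => -[_]; apply.
move=> h1 h2; case: (ltngtP n n') => // lt; exfalso.
  exact: key lt h1 h2.
exact: key lt h2 h1.
Qed.

Lemma dir21 (T : uniformType) (Y : set T) : entourage_separated T ->
  partition_rel (@omega_cover T) (omega_cover_of Y) 2 ->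
  S1 (@omega_cover T) (omega_cover_of Y).
Proof.
move=> sep hP O hO.
have cof := cofin_part sep hP.
have infY : infinite_set Y.
  move=> fY; apply: (omega_infinite (hO 0)).
  by rewrite -(setUv Y) finite_setU.
have [d [dY dinj]] := inj_seq infY.
pose R := Rk Y O d.
pose W := [set w | exists n, R n w].
pose f := fun P : set (set T) =>
  if pselect (exists n, forall v, P v -> R n v) then (@Ordinal 2 1 isT) else (@Ordinal 2 0 isT).
have Wom : omega_cover W.
  apply: (omega_of (Y := Y)).
    move=> w [n [A [OA YA _ ->]]]; split.
    - rewrite setDE; apply: openI; first by have [h _] := hO n; apply: h.
      by rewrite openC; apply: sep_closed1.
    - by move=> sY; have [_] := sY _ (dY n); apply.
    - move=> x nYx; split; first exact: YA.
      by move=> /= xe; apply: nYx; rewrite xe.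
  move=> F fF FY.
  have [n nF] := inj_not_in dinj fF.
  have fin : finite_set (F `|` ~` Y `|` [set d i | i in `I_n]).
    rewrite !finite_setU; split; [split=> //|].
    by apply: finite_image; exact: finite_II.
  have [_ [_ hc]] := hO n.
  have [A OA sA] := hc _ fin.
  exists (A `\ d n).
    exists n; exists A; split => //.
    - by move=> x nYx; apply: sA; left; right.
    - by move=> i lt; apply: sA; right; exists i.
  move=> x Fx; split; first by apply: sA; left; left.
  by move=> /= xe; apply: nF; rewrite -xe.
have [i [V [VW [hV hom]]]] := hP W Wom f.
have [_ [_ hVc]] := hV.
have pairE : forall v v', V v -> V v' -> forall n, R n v -> R n v' -> v = v' \/
    f [set v; v'] = (@Ordinal 2 1 isT) /\ f [set v; v'] = i.
  move=> v v' Vv Vv' n Rv Rv'.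
  case: (pselect (v = v')) => [e|ne]; [by left|right]; split.
    rewrite /f; case: pselect => // nex; exfalso; apply: nex.
    by exists n => x /= [->|->].
  by apply: hom; exists v, v'.
case: i hom pairE => [[|[|j]] ij] hom pairE; last by [].
-
  have hT : forall n, exists A, [/\ O n A, ~` Y `<=` A &
      forall v, V v -> R n v -> v `<=` A].
    move=> n.
    case: (pselect (exists v, V v /\ R n v)) => [[v [Vv Rv]]|nv].
      have [A [OA YA _ ve]] := Rv.
      exists A; split => // v' Vv' Rv'.
      have [e|[e1 e2]] := pairE v v' Vv Vv' n Rv Rv'.
        by rewrite -e ve => x [].
      by rewrite e1 in e2; move/(congr1 val): e2.
    have [_ [_ hc]] := hO n.
    have [A OA sA] := hc _ cof.
    exists A; split => // v Vv Rv; exfalso; apply: nv; by exists v.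
  have [Tn hTn] := choice hT.
  exists Tn; split; first by move=> n; have [] := hTn n.
  apply: omegaY_of.
    move=> _ [n _ <-]; have [OA YA _] := hTn n; split.
      by have [h _] := hO n; apply: h.
    move=> sY; have [_ [nT _]] := hO n; apply: nT.
    have e : Tn n = setT by rewrite -subTset -(setUv Y) => x [/sY|/YA].
    by rewrite -e.
  move=> F fF FY; have [v Vv Fv] := hVc F fF FY.
  have [n Rn] := VW v Vv.
  exists (Tn n); first by exists n.
  by have [_ _ h] := hTn n; apply: subset_trans Fv (h v Vv Rn).
-
  exfalso.
  have [v0 Vv0 _] := hVc set0 (finite_set0 _) (sub0set _).
  have [n0 R0] := VW v0 Vv0.
  have fin : finite_set [set d j | j in `I_n0.+1].
    by apply: finite_image; exact: finite_II.
  have finY : [set d j | j in `I_n0.+1] `<=` Y by move=> x [j _ <-]; apply: dY.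
  have [v Vv sv] := hVc _ fin finY.
  have [n Rn] := VW v Vv.
  have nn0 : n <> n0.
    move=> e; rewrite e in Rn; have [A [_ _ _ ve]] := Rn.
    have : v (d n0) by apply: sv; exists n0 => //=.
    by rewrite ve => -[_]; apply.
  have v0v : v0 <> v.
    by move=> e; apply: nn0; apply: (Rk_uniq dinj Rn); rewrite -e.
  have := hom [set v0; v]; rewrite /f; case: pselect.
    move=> [m hm] _; apply: nn0.
    have e1 := Rk_uniq dinj (hm v0 (or_introl erefl)) R0.
    have e2 := Rk_uniq dinj (hm v (or_intror erefl)) Rn.
    by rewrite -e1 -e2.
  move=> nex h; have := h (ex_intro _ v0 (ex_intro _ v (conj v0v (conj Vv0 (conj Vv erefl))))).
  by move/(congr1 val).
Qed.

Fixpoint mx (g : nat -> nat) n := match n with 0 => 0 | n'.+1 => maxn (mx g n') (g n') end.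

Lemma mx_ge g i n : (i < n)%N -> (g i <= mx g n)%N.
Proof.
elim: n => [//|n IH]; rewrite ltnS leq_eqVlt => /orP[/eqP->|lt] /=.
  by rewrite leq_maxr.
by apply: leq_trans (IH lt) _; rewrite leq_maxl.
Qed.

Fixpoint aa (g : nat -> nat) s := match s with 0 => 0 | s'.+1 => aa g s' + mx g (aa g s') + 1 end.

Lemma aa_lt g s : (aa g s < aa g s.+1)%N.
Proof. by rewrite /=; lia. Qed.

Lemma aa_mono g s s' : (s <= s')%N -> (aa g s <= aa g s')%N.
Proof.
move=> ss'; rewrite -(subnKC ss'); elim: (s' - s)%N => [|t IH]; first by rewrite addn0.
by rewrite addnS; apply: leq_trans IH (ltnW (aa_lt _ _)).
Qed.

Lemma aa_ge g s : (s <= aa g s)%N.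
Proof. by elim: s => //= s IH; lia. Qed.

Lemma pc_ex g j : exists s, (j < aa g s.+1)%N.
Proof. by exists j; apply: leq_trans (aa_ge g j.+1). Qed.

Definition pc g j := ex_minn (pc_ex g j).

Lemma pc_hi g j : (j < aa g (pc g j).+1)%N.
Proof. by rewrite /pc; case: ex_minnP. Qed.

Lemma pc_lo g j : (aa g (pc g j) <= j)%N.
Proof.
rewrite /pc; case: ex_minnP => -[//|s] _ hmin.
by rewrite leqNgt; apply/negP => /hmin; rewrite ltnn.
Qed.

Lemma pc_tail g s j : (aa g s <= j)%N -> (s <= pc g j)%N.
Proof.
move=> h; rewrite leqNgt; apply/negP => lt.
have := pc_hi g j; rewrite ltnNge => /negP; apply.
by apply: leq_trans (aa_mono g lt) h.
Qed.

Lemma pc_gap g j j' : ((pc g j).+2 <= pc g j')%N -> (g j <= j')%N.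
Proof.
move=> h.
have h1 := mx_ge g (pc_hi g j).
have h2 : (mx g (aa g (pc g j).+1) < aa g (pc g j).+2)%N by rewrite /=; lia.
have h3 := aa_mono g h.
have h4 := pc_lo g j'.
lia.
Qed.

Fixpoint inter (T : Type) (w : nat -> set T) (q : nat -> nat) n :=
  match n with 0 => w (q 0) | n'.+1 => inter w q n' `&` w (q n'.+1) end.

Lemma inter_sub T (w : nat -> set T) q n i : (i <= n)%N -> inter w q n `<=` w (q i).
Proof.
elim: n => [|n IH]; first by rewrite leqn0 => /eqP->.
rewrite leq_eqVlt => /orP[/eqP->|lt] x /= [a b] //.
exact: IH.
Qed.

Lemma inter_sup T (w : nat -> set T) q n (F : set T) :
  (forall i, (i <= n)%N -> F `<=` w (q i)) -> F `<=` inter w q n.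
Proof.
elim: n => [|n IH] h x Fx /=; first exact: h.
split; last exact: h.
by apply: IH => // i lt; apply: h; apply: leq_trans lt _.
Qed.

Lemma inter_open (T : topologicalType) (w : nat -> set T) q n :
  (forall m, open (w m)) -> open (inter w q n).
Proof. by move=> ho; elim: n => [|n IH] //=; apply: openI. Qed.

Definition pick (Q : nat -> nat -> nat) (p : nat -> nat) n (L : seq nat) :=
  let s := [seq Q n i | i <- iota 0 n.+1] in
  nth 0 s (find (fun j => p j \notin map p L) s).

Fixpoint Rs Q p n : seq nat :=
  match n with 0 => [::] | n'.+1 => rcons (Rs Q p n') (pick Q p n' (Rs Q p n')) end.

Definition rr Q p n := pick Q p n (Rs Q p n).

Lemma Rs_eq Q p n : Rs Q p n = map (rr Q p) (iota 0 n).
Proof.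
elim: n => [//|n IH].
have -> : iota 0 n.+1 = rcons (iota 0 n) n by rewrite -cats1 -(addn1 n) iotaD.
by rewrite map_rcons -IH.
Qed.

Lemma pick_spec Q p n L : (size L <= n)%N ->
  (forall i i', (i < i')%N -> (i' <= n)%N -> (p (Q n i) < p (Q n i'))%N) ->
  (exists2 i, (i <= n)%N & pick Q p n L = Q n i) /\ p (pick Q p n L) \notin map p L.
Proof.
move=> sL mono.
set s := [seq Q n i | i <- iota 0 n.+1].
have hs : has (fun j => p j \notin map p L) s.
  apply: contraT => /hasPn hall.
  have u : uniq (map p s).
    rewrite -map_comp map_inj_in_uniq ?iota_uniq //.
    move=> i i'; rewrite !mem_iota /= !add0n => hi hi' e.
    case: (ltngtP i i') => // lt.
      by have := mono _ _ lt hi'; rewrite e ltnn.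
    by have := mono _ _ lt hi; rewrite e ltnn.
  have sub : {subset map p s <= map p L}.
    by move=> x /mapP[j js ->]; have := hall j js; rewrite negbK.
  have := uniq_leq_size u sub.
  by rewrite !size_map size_iota; move=> h; have := leq_trans h sL; rewrite ltnn.
split; last exact: (nth_find 0 hs).
have : pick Q p n L \in s by rewrite /pick mem_nth // -has_find.
move=> /mapP[i]; rewrite mem_iota add0n /= => hi ->.
by exists i.
Qed.

Definition colP (T : Type) (Y : set T) (u : nat -> set T) k (f : set (set T) -> 'I_k)
  (M : set nat) n c :=
  (c < k)%N /\ good Y u (M `&` [set m | nat_of_ord (f [set u n; u m]) = c]).

Definition col (T : Type) (Y : set T) (u : nat -> set T) k (f : set (set T) -> 'I_k)
  (M : set nat) n : nat :=
  match pselect (exists c, colP Y u f M n c) with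
  | left h => proj1_sig (cid h) | right _ => 0 end.

Definition stepM (T : Type) (Y : set T) (u : nat -> set T) k (f : set (set T) -> 'I_k)
  (M : set nat) n : set nat :=
  M `&` [set m | nat_of_ord (f [set u n; u m]) = col Y u f M n].

Fixpoint prevM (T : Type) (Y : set T) (u : nat -> set T) k (f : set (set T) -> 'I_k) n :=
  match n with 0 => setT | n'.+1 => stepM Y u f (prevM Y u f n') n' end.

Lemma col_spec T Y (u : nat -> set T) k (f : set (set T) -> 'I_k) M n :
  good Y u M -> colP Y u f M n (col Y u f M n).
Proof.
move=> gM; rewrite /col; case: pselect => [h|nh]; first exact: proj2_sig (cid h).
exfalso; apply: nh.
have [c ck gc] := @good_part _ Y u k (fun m => nat_of_ord (f [set u n; u m])) M gM
  (fun m _ => ltn_ord _).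
by exists c.
Qed.

Lemma prevM_good T Y (u : nat -> set T) k (f : set (set T) -> 'I_k) n :
  good Y u setT -> good Y u (prevM Y u f n).
Proof. by move=> g; elim: n => [//|n IH] /=; have [] := col_spec f n IH. Qed.

Lemma prevM_dec T Y (u : nat -> set T) k (f : set (set T) -> 'I_k) n n' :
  (n <= n')%N -> prevM Y u f n' `<=` prevM Y u f n.
Proof.
move=> nn'; rewrite -(subnKC nn'); elim: (n' - n)%N => [|t IH]; first by rewrite addn0.
by rewrite addnS => m /= [/IH].
Qed.

Lemma par_gap a b : a <> b -> odd a = odd b -> (a.+2 <= b)%N \/ (b.+2 <= a)%N.
Proof.
move=> ne eo; case: (ltngtP a b) => h; last by [].
- left; move: h; rewrite leq_eqVlt => /orP[/eqP e|//].
  by move: eo; rewrite -e /= => /eqP; rewrite eq_sym; case: (odd a).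
- right; move: h; rewrite leq_eqVlt => /orP[/eqP e|//].
  by move: eo; rewrite -e /= => /eqP; case: (odd b).
Qed.

Lemma ltn_b2 (b : bool) : (nat_of_bool b < 2)%N.
Proof. by case: b. Qed.

Lemma dir12 (T : uniformType) (Y : set T) : entourage_separated T ->
  S1 (@omega_cover T) (omega_cover_of Y) ->
  forall k : nat, (0 < k)%N -> partition_rel (@omega_cover T) (omega_cover_of Y) k.
Proof.
move=> sep hS k k0 U hU f.
have cof := cofin_S1 sep hS.
pose UG := [set A | U A /\ ~` Y `<=` A].
have UGom : omega_cover UG.
  have [hUo [hUT hUc]] := hU.
  split; [by move=> W [/hUo]|split; first by move=> [/hUT]].
  move=> F fF; have fin : finite_set (F `|` ~` Y) by rewrite finite_setU.
  have [A UA sA] := hUc _ fin.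
  by exists A; [split=> // x nYx; apply: sA; right|move=> x Fx; apply: sA; left].
have [u [uUG uY]] := hS (fun _ => UG) (fun _ => UGom).
have uo : forall m, open (u m) by move=> m; have [h _] := uY; apply: h; exists m.
have unY : forall m, ~ (Y `<=` u m) by move=> m; have [_ [h _]] := uY; apply: h; exists m.
have uG : forall m, ~` Y `<=` u m by move=> m; have [] := uUG m.
have uU : forall m, U (u m) by move=> m; have [] := uUG m.
have gu := good_range uY.
pose pM n := prevM Y u f n.+1.
have pMg : forall n, good Y u (pM n) by move=> n; apply: prevM_good.
have Oom : forall n, omega_cover [set u m | m in pM n].
  move=> n; apply: (omega_of (Y := Y)); first by move=> _ [m _ <-]; split; [apply: uo|apply: unY|apply: uG].
  by move=> F fF FY; have [m pm Fm] := pMg n F fF FY; exists (u m) => //; exists m.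
have [Tn [hTn hTY]] := hS (fun n => [set u m | m in pM n]) Oom.
have hg' : forall n, exists m, pM n m /\ u m = Tn n.
  by move=> n; have [m ? ?] := hTn n; exists m.
have [g hg] := choice hg'.
pose w := fun j => u (g j).
have gw : good Y w setT.
  move=> F fF FY; have [n _ Fn] := good_range hTY fF FY.
  by exists n => //; rewrite /w (hg n).2.
have wnY : forall j, ~ (Y `<=` w j) by move=> j; apply: unY.
pose p := pc g.
pose mono n (q : nat -> nat) := forall i i', (i < i')%N -> (i' <= n)%N -> (p (q i) < p (q i'))%N.
have build : forall F, finite_set F -> F `<=` Y -> forall n,
    exists q, mono n q /\ forall i, (i <= n)%N -> F `<=` w (q i).
  move=> F fF FY; elim=> [|n [q [mq Fq]]].
    have [j _ Fj] := gw F fF FY.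
    by exists (fun _ => j); split => [i i' ii' |i _] //; rewrite leqn0 => /eqP e; rewrite e in ii'.
  have [j [_ /= hj] Fj] := @good_tail _ Y w setT (aa g (p (q n)).+1) wnY gw F fF FY.
  have pj : (p (q n) < p j)%N by apply: pc_tail.
  exists (fun i => if (i <= n)%N then q i else j); split.
    move=> i i' ii' i'n /=.
    have i_n : (i <= n)%N by rewrite -ltnS; apply: leq_trans ii' i'n.
    rewrite i_n; case: ifP => [i'le|_]; first exact: mq.
    apply: leq_trans pj; rewrite ltnS.
    move: i_n; rewrite leq_eqVlt => /orP[/eqP->//|lt]; exact: ltnW (mq _ _ lt (leqnn n)).
  move=> i _; case: ifP => h; [exact: Fq|exact: Fj].
pose C n := [set inter w q n | q in mono n].
have Com : forall n, omega_cover (C n).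
  move=> n; apply: (omega_of (Y := Y)).
    move=> _ [q _ <-]; split.
    - by apply: inter_open => m; apply: uo.
    - by move=> sY; apply: (wnY (q 0)); move=> x /sY; exact: (inter_sub (leq0n n)).
    - by apply: inter_sup => i _; apply: uG.
  move=> F fF FY; have [q [mq Fq]] := build F fF FY n.
  by exists (inter w q n); [exists q|apply: inter_sup].
have [T' [hT' hT'Y]] := hS C Com.
have hQ' : forall n, exists q, mono n q /\ inter w q n = T' n.
  by move=> n; have [q ? ?] := hT' n; exists q.
have [Q hQ] := choice hQ'.
pose r := rr Q p.
have rspec : forall n, (exists2 i, (i <= n)%N & r n = Q n i) /\
    p (r n) \notin map p (Rs Q p n).
  move=> n; apply: pick_spec; first by rewrite Rs_eq size_map size_iota.
  by move=> i i' ii' i'n; apply: (hQ n).1.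
have rdist : forall t n, (t < n)%N -> p (r t) <> p (r n).
  move=> t n tn e; have [_ /negP] := rspec n; apply.
  by rewrite Rs_eq -e; apply: map_f; apply: map_f; rewrite mem_iota.
have gr : good Y (fun n => w (r n)) setT.
  move=> F fF FY; have [n _ Fn] := good_range hT'Y fF FY.
  exists n => //; have [[i i_n ->] _] := rspec n.
  by apply: subset_trans Fn _; rewrite -(hQ n).2; apply: inter_sub.
have [e e2 gM1] := @good_part _ Y _ 2 (fun n => nat_of_bool (odd (p (r n)))) _ gr
  (fun n _ => ltn_b2 _).
pose cs := fun j => col Y u f (prevM Y u f j) j.
have csk : forall j, (cs j < k)%N.
  by move=> j; have [] := col_spec f j (prevM_good f j gu).
have [c0 c0k gM2] := @good_part _ Y _ k (fun n => cs (g (r n))) _ gM1 (fun n _ => csk _).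
exists (Ordinal c0k).
pose M2 := ([set: nat] `&` [set n | nat_of_bool (odd (p (r n))) = e]) `&` [set n | cs (g (r n)) = c0].
exists [set w (r n) | n in M2]; split; [|split].
- by move=> _ [n _ <-]; apply: uU.
- apply: omegaY_of; first by move=> _ [n _ <-]; split; [apply: uo|apply: unY].
  by move=> F fF FY; have [n Mn Fn] := gM2 F fF FY; exists (w (r n)) => //; exists n.
- have key : forall n n', M2 n -> M2 n' -> ((p (r n)).+2 <= p (r n'))%N ->
      f [set w (r n); w (r n')] = Ordinal c0k.
    move=> n n' [_ cn] _ gap; apply: val_inj => /=; rewrite -cn.
    have le := pc_gap gap.
    have : prevM Y u f (r n').+1 `<=` prevM Y u f (g (r n)).+1 by apply: prevM_dec; rewrite ltnS.
    move=> /(_ (g (r n'))) h; have := h (hg (r n')).1.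
    by move=> [_ /= ->].
  move=> P [x [y [xy [[n Mn xe] [[n' Mn' ye] ->]]]]].
  have nn' : n <> n' by move=> nn; apply: xy; rewrite -xe -ye nn.
  have pd : p (r n) <> p (r n').
    by case: (ltngtP n n') => // lt; [apply: rdist|move=> /esym; apply: rdist].
  have po : odd (p (r n)) = odd (p (r n')).
    have [[_ o1] _] := Mn; have [[_ o2] _] := Mn'.
    by move: o1 o2 => /= o1; rewrite -o1; case: (odd (p (r n))); case: (odd (p (r n'))).
  rewrite -xe -ye; have [g1|g1] := par_gap pd po.
    exact: key.
  by rewrite setUC; apply: key.
Qed.

Unset Implicit Arguments.
Theorem theorem4p7 (T : uniformType) (Y : set T) :
  entourage_separated T -> sigma_compact T ->
  (S1 (@omega_cover T) (omega_cover_of Y) <->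
   (forall k : nat, (0 < k)%N -> partition_rel (@omega_cover T) (omega_cover_of Y) k)).
Proof.
move=> sep _; split; first exact: dir12.
by move=> h; apply: dir21 => //; apply: h.
Qed.
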